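(* Let $\mathcal{A}$ and $\mathcal{B}$ be unital complex algebras with faithful and regular Sylvester rank functions $\mathrm{rk}_{\mathcal{A}}$ and $\mathrm{rk}_{\mathcal{B}}$. Let $X=(X_1,\dots,X_d)\in\mathcal{A}^d$ and $Y=(Y_1,\dots,Y_d)\in\mathcal{B}^d$ be such that for any matrix $A$ over $\mathbb{C}\langle x_1,\dots,x_d\rangle$, $$\mathrm{rk}_{\mathcal{B}}(A(Y))\le\mathrm{rk}_{\mathcal{A}}(A(X)).$$ Then: (1) there is a unique specialization from the rational closure $\mathcal{A}_X$ to the rational closure $\mathcal{B}_Y$; (2) for any rational expression $R$ in $x_1,\dots,x_d$ such that $R(Y)$ is well-defined, $R(X)$ is also well-defined and $\mathrm{rk}_{\mathcal{B}}(R(Y))\le\mathrm{rk}_{\mathcal{A}}(R(X))$.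
   Context: A Sylvester rank function on a unital complex algebra $\mathcal{A}$ is a function $\mathrm{rk}$ from rectangular matrices over $\mathcal{A}$ to $[0,\infty)$ with: $\mathrm{rk}(0)=0$, $\mathrm{rk}(1)=1$; $\mathrm{rk}(AB)\le\min(\mathrm{rk}A,\mathrm{rk}B)$; $\mathrm{rk}(A\oplus B)=\mathrm{rk}A+\mathrm{rk}B$; $\mathrm{rk}\begin{pmatrix}A&C\\0&B\end{pmatrix}\ge\mathrm{rk}A+\mathrm{rk}B$. It is faithful if $\mathrm{rk}(A)>0$ for all nonzero $A$, and regular if every $A\in M_n(\mathcal{A})$ with $\mathrm{rk}(A)=n$ is invertible. A $\mathbb{C}\langle x_1,\dots,x_d\rangle$-algebra is a unital algebra $\mathcal{C}$ with a homomorphism $\phi:\mathbb{C}\langle x_1,\dots,x_d\rangle\to\mathcal{C}$; $\Sigma_\phi$ is the set of square matrices $A$ over $\mathbb{C}\langle x_1,\dots,x_d\rangle$ (of any size $n$) with $\phi(A)$ invertible in $M_n(\mathcal{C})$; for a tuple $X$ in $\mathcal{C}$ with $\phi(P)=P(X)$ write $\Sigma_X$. The rational closure $\mathcal{A}_X$ is the set of all entries of $A(X)^{-1}$, $A\in\Sigma_X$; it is a subalgebra containing the algebra generated by $X$, regarded as a $\mathbb{C}\langle x\rangle$-algebra via $P\mapsto P(X)$. A subhomomorphism from a $\mathbb{C}\langle x\rangle$-algebra $(\mathcal{C},\phi_{\mathcal{C}})$ to $(\mathcal{D},\phi_{\mathcal{D}})$ is a homomorphism $f:\mathcal{C}_f\to\mathcal{D}$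 defined on a subalgebra $\mathcal{C}_f\supseteq\phi_{\mathcal{C}}(\mathbb{C}\langle x\rangle)$, with structure map $\phi_f=\phi_{\mathcal{C}}$, such that $f\circ\phi_f=\phi_{\mathcal{D}}$ and $\Sigma_{\phi_{\mathcal{D}}}\subseteq\Sigma_{\phi_f}$. Two subhomomorphisms are equivalent if they agree on a subalgebra on which their common restriction is again a subhomomorphism; a specialization is an equivalence class. Rational expressions (combinations of scalars and $x_i$ via $+,\cdot,{}^{-1}$, parentheses) are evaluated recursively in an algebra, an inverse being defined only where the argument is invertible; ''well-defined'' means $X$ lies in the domain. *)

(* Defs.v *)
From HB Require Import structures.
From mathcomp Require Import all_boot all_order all_algebra.
From mathcomp Require Import boolp reals.
From mathcomp.real_closed Require Import complex.
From mathcomp.multinomials Require Import monalg.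

Set Implicit Arguments.
Unset Strict Implicit.
Unset Printing Implicit Defensive.

Import Order.TTheory GRing.Theory Num.Theory.
Local Open Scope ring_scope.

Section SylvesterDefs.
Variable R : realType.
Local Notation C := (R[i]).

(* The free algebra C<x_1,...,x_d>: the monoid algebra of the free monoid on
   d letters. *)
Definition ncpoly (d : nat) := {malg C[{fmonom 'I_d}]}.

Section InAlgebra.
Variable A : algType C.

Definition nc_eval (d : nat) (X : 'I_d -> A) (P : ncpoly d) : A :=
  mmap (fun c : C => c%:A) (fun m : {fmonom 'I_d} => \prod_(i <- fmonom_val m) X i) P.

Definition nc_evalmx (d : nat) (X : 'I_d -> A) m n
    (M : 'M[ncpoly d]_(m, n)) : 'M[A]_(m, n) :=
  map_mx (nc_eval X) M.

Definition mx_invertible_in (S : pred A) n (M : 'M[A]_n) : Prop :=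
  exists N : 'M[A]_n, (forall i j, S (N i j)) /\
    M *m N = 1%:M /\ N *m M = 1%:M.

Definition mx_invertible n (M : 'M[A]_n) : Prop := mx_invertible_in predT M.

Definition rank_fun := forall m n, 'M[A]_(m, n) -> R.

Record sylvester_rank (rk : rank_fun) : Prop := {
  srk_ge0 : forall m n (M : 'M[A]_(m, n)), 0 <= rk m n M;
  srk0 : rk 1%N 1%N 0 = 0;
  srk1 : rk 1%N 1%N 1%:M = 1;
  srk_mul : forall m n p (M : 'M[A]_(m, n)) (N : 'M[A]_(n, p)),
      rk m p (M *m N) <= Num.min (rk m n M) (rk n p N);
  srk_diag : forall m1 n1 m2 n2 (M : 'M[A]_(m1, n1)) (N : 'M[A]_(m2, n2)),
      rk _ _ (block_mx M 0 0 N) = rk _ _ M + rk _ _ N;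
  srk_trig : forall m1 n1 m2 n2 (M : 'M[A]_(m1, n1)) (N : 'M[A]_(m2, n2))
      (Q : 'M[A]_(m1, n2)),
      rk _ _ M + rk _ _ N <= rk _ _ (block_mx M Q 0 N)
}.

Definition rank_faithful (rk : rank_fun) : Prop :=
  forall m n (M : 'M[A]_(m, n)), M != 0 -> 0 < rk m n M.

Definition rank_regular (rk : rank_fun) : Prop :=
  forall n (M : 'M[A]_n), rk n n M = n%:R -> mx_invertible M.

Definition rat_closure (d : nat) (X : 'I_d -> A) : pred A :=
  fun a => `[< exists n (P : 'M[ncpoly d]_n) (N : 'M[A]_n),
      nc_evalmx X P *m N = 1%:M /\ N *m nc_evalmx X P = 1%:M /\
      exists i j, a = N i j >].

Inductive rexpr (d : nat) : Type :=
| RConst of C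
| RVar of 'I_d
| RAdd of rexpr d & rexpr d
| RMul of rexpr d & rexpr d
| RInv of rexpr d.

(* rexpr_eval X r a : the rational expression r is well defined at X
   and its (recursively computed) value is a. *)
Inductive rexpr_eval (d : nat) (X : 'I_d -> A) : rexpr d -> A -> Prop :=
| REvConst c : rexpr_eval X (RConst d c) (c%:A)
| REvVar i : rexpr_eval X (RVar i) (X i)
| REvAdd r s a b : rexpr_eval X r a -> rexpr_eval X s b ->
    rexpr_eval X (RAdd r s) (a + b)
| REvMul r s a b : rexpr_eval X r a -> rexpr_eval X s b ->
    rexpr_eval X (RMul r s) (a * b)
| REvInv r a b : rexpr_eval X r a -> a * b = 1 -> b * a = 1 ->
    rexpr_eval X (RInv r) b.

End InAlgebra.

Section Specialization.
Variables A B : algType C.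
Variable d : nat.
Variables (X : 'I_d -> A) (Y : 'I_d -> B).

(* A subhomomorphism from the C<x>-algebra (A_X, P |-> P(X)) to the
   C<x>-algebra (B_Y, P |-> P(Y)): a homomorphism f defined on a subalgebra
   S of A_X containing the image of C<x>, with f(P(X)) = P(Y), and
   Sigma_{B_Y} included in Sigma_f (invertibility over S). *)
Record subhom (S : pred A) (f : A -> B) : Prop := {
  subhom_sub : {subset S <= rat_closure X};
  subhom_subalg : GRing.subalg_closed S;
  subhom_gen : forall P : ncpoly d, nc_eval X P \in S;
  subhom_1 : f 1 = 1;
  subhom_add : {in S &, forall a b, f (a + b) = f a + f b};
  subhom_mul : {in S &, forall a b, f (a * b) = f a * f b};
  subhom_scale : forall (c : C), {in S, forall a, f (c *: a) = c *: f a};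
  subhom_range : {in S, forall a, f a \in rat_closure Y};
  subhom_struct : forall P : ncpoly d, f (nc_eval X P) = nc_eval Y P;
  subhom_sigma : forall n (P : 'M[ncpoly d]_n),
      mx_invertible_in (rat_closure Y) (nc_evalmx Y P) ->
      mx_invertible_in S (nc_evalmx X P)
}.

Definition subhom_equiv (S1 : pred A) (f1 : A -> B) (S2 : pred A) (f2 : A -> B)
    : Prop :=
  exists S : pred A, [/\ {subset S <= S1}, {subset S <= S2},
      {in S, f1 =1 f2} & subhom S f1].

(* There is a unique specialization (equivalence class of subhomomorphisms)
   from A_X to B_Y. *)
Definition unique_specialization : Prop :=
  (exists (S : pred A) (f : A -> B), subhom S f) /\
  (forall S1 f1 S2 f2, subhom S1 f1 -> subhom S2 f2 -> subhom_equiv S1 f1 S2 f2).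

End Specialization.
End SylvesterDefs.

(* Main.v *)
Require Import Defs.
From HB Require Import structures.
From mathcomp Require Import all_boot all_order all_algebra.
From mathcomp Require Import boolp reals.
From mathcomp.real_closed Require Import complex.
From mathcomp.multinomials Require Import monalg.
Import Order.TTheory GRing.Theory Num.Theory.
Local Open Scope ring_scope.

HB.instance Definition _ (R : realType) (d : nat) := GRing.Lalgebra.on (ncpoly R d).
Section Ev.
Variable R : realType.
Variable A : algType R[i].
Variable d : nat.
Variable Z : 'I_d -> A.

Definition hZ (m : {fmonom 'I_d}) : A := \prod_(i <- fmonom_val m) Z i.

Lemma hZ_mm : mmorphism hZ.
Proof.
split.
  move=> m1 m2; change (hZ (fmmul m1 m2) = hZ m1 * hZ m2).
  by rewrite /hZ fmmulE big_cat.
by change (hZ (fmone _) = 1); rewrite /hZ fmoneE big_nil.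
Qed.

HB.instance Definition _ := monalg.isMultiplicative.Build _ _ hZ hZ_mm.

Lemma nc_eval_add : additive (nc_eval Z).
Proof. exact: (@mmap_is_additive _ _ _ (GRing.in_alg A) hZ). Qed.
HB.instance Definition _ := GRing.isAdditive.Build (ncpoly R d) A (nc_eval Z) nc_eval_add.

Lemma nc_eval_mult : multiplicative (nc_eval Z).
Proof.
have := @commr_mmap_is_multiplicative _ _ _ (GRing.in_alg A) hZ.
apply => g m m'; rewrite /GRing.comm /=.
by rewrite mulr_algl mulr_algr.
Qed.
HB.instance Definition _ := GRing.isMultiplicative.Build (ncpoly R d) A (nc_eval Z) nc_eval_mult.
Lemma nc_evalC (c : R[i]) : nc_eval Z (c%:MP : ncpoly R d) = c%:A.
Proof. exact: (@mmapC _ _ _ (GRing.in_alg A) (hZ)). Qed.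

Lemma nc_evalV (i : 'I_d) : nc_eval Z (<< (1 : R[i]) *g fmu i >> : ncpoly R d) = Z i.
Proof.
rewrite /nc_eval (@mmapU _ _ _ (GRing.in_alg A) (hZ)) /= scale1r mul1r /hZ.
by rewrite fmuE big_seq1.
Qed.
End Ev.
Section MxAlg.
Variable T : nzRingType.

Definition inv_pair {n} (M N : 'M[T]_n) := M *m N = 1%:M /\ N *m M = 1%:M.

Lemma inv_uniq {n} (M N1 N2 : 'M[T]_n) : inv_pair M N1 -> inv_pair M N2 -> N1 = N2.
Proof.
move=> [h1 h2] [h3 h4].
by rewrite -[N1]mulmx1 -h3 mulmxA h2 mul1mx.
Qed.

Lemma left_inv_uniq {n} (M N1 N2 : 'M[T]_n) : inv_pair M N1 -> M *m N2 = 1%:M -> N1 = N2.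
Proof.
move=> [h1 h2] h3.
by rewrite -[N1]mulmx1 -h3 mulmxA h2 mul1mx.
Qed.

Lemma ut_inv {m n} (P Pi : 'M[T]_m) (Q Qi : 'M[T]_n) (W : 'M[T]_(m,n)) :
  inv_pair P Pi -> inv_pair Q Qi ->
  inv_pair (block_mx P W 0 Q) (block_mx Pi (-(Pi *m W *m Qi)) 0 Qi).
Proof.
move=> [h1 h2] [h3 h4]; split; rewrite mulmx_block !mul0mx !mulmx0 !addr0 !add0r.
  rewrite h1 h3 mulmxN !mulmxA h1 mul1mx addNr.
  by rewrite -scalar_mx_block.
rewrite h2 h4 mulNmx -[Pi *m W *m Qi *m Q]mulmxA h4 mulmx1 addrN.
by rewrite -scalar_mx_block.
Qed.

Lemma one_block {m n} : block_mx (1%:M : 'M[T]_m) 0 0 (1%:M : 'M_n) = 1%:M.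
Proof. by rewrite -scalar_mx_block. Qed.

End MxAlg.
Arguments inv_pair {T n}.
Lemma lt_inv {T : nzRingType} {m n} (X : 'M[T]_(n,m)) :
  inv_pair (block_mx 1%:M 0 X 1%:M) (block_mx 1%:M 0 (-X) 1%:M).
Proof.
split; rewrite mulmx_block !mul0mx !mulmx0 !addr0 !mul1mx !mulmx1 ?addNr ?addrN add0r;
  by rewrite -scalar_mx_block.
Qed.

Section Rank.
Variable R : realType.
Variable A : algType R[i].
Variable rk : rank_fun A.
Hypothesis srk : sylvester_rank rk.

Lemma rk00 (x : 'M[A]_(0,0)) : rk 0 0 x = 0.
Proof.
have := srk_diag srk (0 : 'M[A]_(0,0)) (0 : 'M[A]_(0,0)).
have -> : block_mx (0 : 'M[A]_(0,0)) 0 0 0 = 0 :> 'M_(0,0) by apply: flatmx0.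
rewrite (flatmx0 x).
move=> /(congr1 (fun x => x - rk 0 0 0)); rewrite addrK subrr.
by move=> <-.
Qed.

Lemma rk_id n : rk n n 1%:M = n%:R.
Proof.
elim: n => [|n IH]; first by rewrite rk00.
have := srk_diag srk (1%:M : 'M[A]_1) (1%:M : 'M_n).
rewrite -scalar_mx_block (srk1 srk) IH mulrS.
by [].
Qed.

Lemma rk_mull {m n p} (M : 'M[A]_(m,n)) (N : 'M[A]_(n,p)) : rk _ _ (M *m N) <= rk _ _ M.
Proof. by move: (srk_mul srk M N); rewrite le_min => /andP[]. Qed.

Lemma rk_mulr {m n p} (M : 'M[A]_(m,n)) (N : 'M[A]_(n,p)) : rk _ _ (M *m N) <= rk _ _ N.
Proof. by move: (srk_mul srk M N); rewrite le_min => /andP[]. Qed.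

Lemma rk_le_rows {m n} (M : 'M[A]_(m,n)) : rk m n M <= m%:R.
Proof. by rewrite -(rk_id m) -{1}(mul1mx M) rk_mull. Qed.

Lemma rk_inv {n} (M N : 'M[A]_n) : inv_pair M N -> rk n n M = n%:R.
Proof.
move=> [h1 h2]; apply/le_anti; rewrite rk_le_rows /=.
by rewrite -{1}(rk_id n) -h1 rk_mull.
Qed.

Lemma rk_eqmul {m n} (P Pi : 'M[A]_m) (Q Qi : 'M[A]_n) (L : 'M[A]_(m,n)) :
  inv_pair P Pi -> inv_pair Q Qi -> rk _ _ (P *m L *m Q) = rk _ _ L.
Proof.
move=> [h1 h2] [h3 h4]; apply/le_anti; apply/andP; split.
  by apply: (le_trans (rk_mull _ _)); apply: rk_mulr.
have E : L = Pi *m (P *m L *m Q) *m Qi.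
  by rewrite !mulmxA h2 mul1mx -mulmxA h3 mulmx1.
rewrite [X in rk _ _ X <= _]E.
by apply: (le_trans (rk_mull _ _)); apply: rk_mulr.
Qed.

Lemma rk_opp {m n} (M : 'M[A]_(m,n)) : rk _ _ (- M) = rk _ _ M.
Proof.
have h : forall N : 'M[A]_(m,n), rk _ _ (- N) <= rk _ _ N.
  by move=> N; rewrite -[N in - N]mul1mx -mulNmx rk_mulr.
by apply/le_anti; rewrite h /= -{1}(opprK M) h.
Qed.

Lemma rk_schur {n} (M Mi : 'M[A]_n) (u : 'M[A]_(1,n)) (v : 'M[A]_(n,1)) :
  inv_pair M Mi ->
  rk (n+1) (n+1) (block_mx M v u 0) = n%:R + rk 1 1 (u *m Mi *m v).
Proof.
move=> hM.
have E : block_mx M v u 0 = block_mx 1%:M 0 (u *m Mi) 1%:M *m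
   block_mx M 0 0 (-(u *m Mi *m v)) *m block_mx 1%:M (-(1%:M *m (-(Mi *m v)) *m 1%:M)) 0 1%:M.
  case: hM => h1 h2.
  rewrite !mulmx_block !mul0mx !mulmx0 !addr0 !add0r !mul1mx !mulmx1 !mulmxN !opprK.
  by rewrite addr0 (mulmxA M Mi v) h1 mul1mx -(mulmxA u Mi M) h2 mulmx1 mulmxA addrN.
have i1 : inv_pair (1%:M : 'M[A]_1) 1%:M by split; rewrite mulmx1.
have i2 : inv_pair (1%:M : 'M[A]_n) 1%:M by split; rewrite mulmx1.
rewrite E (rk_eqmul _ _ _ _ _ (lt_inv _) (ut_inv _ _ _ _ _ _ i2 i1)).
by rewrite (srk_diag srk) (rk_inv _ _ hM) rk_opp.
Qed.

End Rank.

Section Rep.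
Variable R : realType.
Variable A : algType R[i].
Variable d : nat.
Variable Z : 'I_d -> A.
Local Notation P := (ncpoly R d).
Local Notation ev := (nc_evalmx Z).


Lemma evM {m n p} (X : 'M[P]_(m,n)) (Y : 'M[P]_(n,p)) : ev (X *m Y) = ev X *m ev Y.
Proof. exact: map_mxM. Qed.
Lemma evN {m n} (X : 'M[P]_(m,n)) : ev (- X) = - ev X.
Proof. exact: map_mxN. Qed.
Lemma ev0 {m n} : ev (0 : 'M[P]_(m,n)) = 0.
Proof. exact: map_mx0. Qed.
Lemma ev1 {n} : ev (1%:M : 'M[P]_n) = 1%:M.
Proof. exact: map_mx1. Qed.
Lemma evS {n} (p : P) : ev (p%:M : 'M[P]_n) = (nc_eval Z p)%:M.
Proof. exact: map_scalar_mx. Qed.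
Lemma ev_block {m1 m2 n1 n2} (a : 'M[P]_(m1,n1)) (b : 'M[P]_(m1,n2)) (c : 'M[P]_(m2,n1)) (e : 'M[P]_(m2,n2)) :
  ev (block_mx a b c e) = block_mx (ev a) (ev b) (ev c) (ev e).
Proof. exact: map_block_mx. Qed.
Lemma ev_row {m n1 n2} (a : 'M[P]_(m,n1)) (b : 'M[P]_(m,n2)) : ev (row_mx a b) = row_mx (ev a) (ev b).
Proof. exact: map_row_mx. Qed.
Lemma ev_col {m1 m2 n} (a : 'M[P]_(m1,n)) (b : 'M[P]_(m2,n)) : ev (col_mx a b) = col_mx (ev a) (ev b).
Proof. exact: map_col_mx. Qed.
Lemma ev_delta {m n} i j : ev (delta_mx i j : 'M[P]_(m,n)) = delta_mx i j.
Proof. exact: map_delta_mx. Qed.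

Definition rep {n} (M : 'M[P]_n) (u : 'M[P]_(1,n)) (v : 'M[P]_(n,1)) (a : A) : Prop :=
  exists N, inv_pair (ev M) N /\ ev u *m N *m ev v = a%:M.

Lemma rep_poly (p : P) : rep (1%:M : 'M_1) p%:M 1%:M (nc_eval Z p).
Proof.
exists 1%:M; rewrite ev1 evS; split.
  by split; rewrite mulmx1.
by rewrite !mulmx1.
Qed.

Lemma rep_add {n1 n2} (M1 : 'M[P]_n1) u1 v1 a1 (M2 : 'M[P]_n2) u2 v2 a2 :
  rep M1 u1 v1 a1 -> rep M2 u2 v2 a2 ->
  rep (block_mx M1 0 0 M2) (row_mx u1 u2) (col_mx v1 v2) (a1 + a2).
Proof.
move=> [N1 [i1 e1]] [N2 [i2 e2]].
exists (block_mx N1 (-(N1 *m 0 *m N2)) 0 N2).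
rewrite ev_block ev_row ev_col !ev0; split.
  by apply: ut_inv.
rewrite mul_row_block mul_row_col !mulmx0 !mul0mx oppr0 !mulmx0 !addr0 add0r.
by rewrite e1 e2 raddfD.
Qed.

Lemma rep_neg {n} (M : 'M[P]_n) u v a : rep M u v a -> rep M (- u) v (- a).
Proof.
move=> [N [i e]]; exists N; split => //.
by rewrite evN !mulNmx e raddfN.
Qed.

Lemma rep_mul {n1 n2} (M1 : 'M[P]_n1) u1 v1 a1 (M2 : 'M[P]_n2) u2 v2 a2 :
  rep M1 u1 v1 a1 -> rep M2 u2 v2 a2 ->
  rep (block_mx M1 (-(v1 *m u2)) 0 M2) (row_mx u1 0) (col_mx 0 v2) (a1 * a2).
Proof.
move=> [N1 [i1 e1]] [N2 [i2 e2]].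
exists (block_mx N1 (-(N1 *m ev (-(v1 *m u2)) *m N2)) 0 N2); split.
  by rewrite ev_block ev0; apply: ut_inv.
rewrite ev_row ev_col !ev0 evN evM.
rewrite mul_row_block mul_row_col !mulmx0 !mul0mx !addr0 add0r.
rewrite !(mulmxN, mulNmx) opprK !mulmxA e1.
rewrite -!mulmxA; rewrite -!mulmxA in e2; rewrite e2.
by rewrite scalar_mxM.
Qed.


Lemma scal11_inj (x y : A) : (x%:M : 'M[A]_1) = y%:M -> x = y.
Proof. by move/matrixP/(_ 0 0); rewrite !mxE eqxx !mulr1n. Qed.

Lemma rep_inv {n} (M : 'M[P]_n) u v a c :
  rep M u v a -> a * c = 1 -> c * a = 1 ->
  rep (block_mx M v u 0) (row_mx 0 (-1%:M)) (col_mx 0 1%:M) c.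
Proof.
move=> [Mi [[h1 h2] e]] hac hca.
set eM := ev M in h1 h2 *; set eu := ev u in e *; set ev' := ev v in e *.
set C : 'M[A]_1 := c%:M.
have kac : forall p (X : 'M[A]_(p,1)), X *m a%:M *m C = X.
  by move=> p X; rewrite -mulmxA -scalar_mxM hac mulmx1.
have kca : forall p (X : 'M[A]_(p,1)), X *m C *m a%:M = X.
  by move=> p X; rewrite -mulmxA -scalar_mxM hca mulmx1.
have k1 : forall p (X : 'M[A]_(p,n)), X *m eM *m Mi = X.
  by move=> p X; rewrite -mulmxA h1 mulmx1.
have k2 : forall p (X : 'M[A]_(p,n)), X *m Mi *m eM = X.
  by move=> p X; rewrite -mulmxA h2 mulmx1.
have ka : forall p (X : 'M[A]_(p,1)), X *m eu *m Mi *m ev' = X *m a%:M.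
  by move=> p X; rewrite -!mulmxA (mulmxA eu Mi ev') e.
have ac : a%:M *m C = 1%:M by rewrite -scalar_mxM hac.
have ca : C *m a%:M = 1%:M by rewrite -scalar_mxM hca.
exists (block_mx (Mi - Mi *m ev' *m C *m eu *m Mi) (Mi *m ev' *m C) (C *m eu *m Mi) (- C)).
rewrite ev_block ev_row ev_col !ev0 evN ev1 -/eM -/eu -/ev'.
split; first split.
- rewrite mulmx_block ?(mulmxBr, mulmxBl, mul0mx, mulmx0, mulmxN, mulNmx) !mulmxA.
  rewrite ?(h1, h2, k1, k2, ka, e, kac, kca, ac, ca, mul1mx, mulmx1).
  rewrite ?(subrK, addrN, addr0, subrr, opprK, mul1mx, mulmx1).
  by rewrite one_block.
- rewrite mulmx_block ?(mulmxBr, mulmxBl, mul0mx, mulmx0, mulmxN, mulNmx) ?mulmxA.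
  rewrite ?(h1, h2, k1, k2, ka, e, kac, kca, ac, ca, mul1mx, mulmx1).
  rewrite ?(subrK, addrN, addr0, subrr, opprK, mul1mx, mulmx1).
  by rewrite one_block.
- rewrite mul_row_block mul_row_col ?(mul0mx, mulmx0, add0r, addr0, mulmx1, mulNmx, mul1mx, opprK).
  by [].
Qed.

Lemma scalN1 (x : A) : ((- x)%:M : 'M[A]_1) = - x%:M.
Proof. by apply/matrixP => i j; rewrite !mxE mulNrn. Qed.

Lemma rep_inv_rev {n} (M : 'M[P]_n) u v a :
  rep M u v a -> (exists N, inv_pair (ev (block_mx M v u 0)) N) ->
  exists c, [/\ a * c = 1, c * a = 1 &
    rep (block_mx M v u 0) (row_mx 0 (-1%:M)) (col_mx 0 1%:M) c].
Proof.
move=> [Mi [[h1 h2] e]] [N [hL1 hL2]].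
set eM := ev M in h1 h2 *; set eu := ev u in e *; set ev' := ev v in e *.
have EN := submxK N.
set p := ulsubmx N in EN; set q := ursubmx N in EN.
set r := dlsubmx N in EN; set s := drsubmx N in EN.
have hL1' := hL1; have hL2' := hL2.
rewrite ev_block ev0 -/eM -/eu -/ev' -EN mulmx_block -one_block in hL1'.
rewrite ev_block ev0 -/eM -/eu -/ev' -EN mulmx_block -one_block in hL2'.
case/eq_block_mx: hL1' => e11 e12 e21 e22.
case/eq_block_mx: hL2' => f11 f12 f21 f22.
rewrite mul0mx addr0 in e22.
rewrite mulmx0 addr0 in f22.
have hq : q = - (Mi *m ev' *m s).
  move/eqP: e12; rewrite addr_eq0 => /eqP e12.
  by rewrite -[q]mul1mx -h2 -mulmxA e12 mulmxN mulmxA.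
have hr : r = - (s *m eu *m Mi).
  move/eqP: f21; rewrite addr_eq0 => /eqP f21.
  by rewrite -[r]mulmx1 -h1 mulmxA f21 mulNmx.
have Es : s = (s 0 0)%:M by apply: mx11_scalar.
have as1 : a%:M *m (- s) = 1%:M.
  by rewrite -e mulmxN -e22 hq mulmxN !mulmxA.
have sa1 : (- s) *m a%:M = 1%:M.
  by rewrite -e mulNmx -f22 hr mulNmx !mulmxA.
exists (- s 0 0); split.
- by apply: scal11_inj; rewrite scalar_mxM scalN1 -Es.
- by apply: scal11_inj; rewrite scalar_mxM scalN1 -Es.
exists N; split; first by [].
rewrite ev_row ev_col !ev0 evN ev1 -EN.
rewrite mul_row_block mul_row_col ?(mul0mx, mulmx0, add0r, addr0, mulmx1, mulNmx, mul1mx, opprK).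
by rewrite scalN1 -Es.
Qed.

Lemma rep_closure {n} (M : 'M[P]_n) u v a : rep M u v a -> rat_closure Z a.
Proof.
move=> [Mi [hM e]].
set eM := ev M in hM *; set eu := ev u in e *; set ev' := ev v in e *.
have i1 : inv_pair (1%:M : 'M[A]_1) 1%:M by split; rewrite mulmx1.
have hin := ut_inv _ _ _ _ _ (- eu) i1 hM.
have hout := ut_inv _ _ _ _ _ (col_mx (0 : 'M[A]_(1,1)) (- ev')) hin i1.
apply/asboolP.
exists (1 + n + 1)%N.
exists (block_mx (block_mx (1%:M : 'M[P]_1) (-u) 0 M) (col_mx (0 : 'M[P]_(1,1)) (-v)) 0 (1%:M : 'M_1)).
eexists.
rewrite !ev_block ev_col !evN !ev0 !ev1 -/eM -/eu -/ev'.
case: hout => o1 o2; split; first exact: o1.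
split; first exact: o2.
exists (lshift 1 (lshift n 0)), (rshift (1 + n) 0).
rewrite block_mxEur mulmx1 mul_block_col !mul0mx !add0r !mul1mx.
rewrite !mulmxN !mulNmx !opprK.
rewrite sub0r mxE col_mxEu mxE opprK e mxE eqxx mulr1n.
by [].
Qed.

Lemma rep_entry {n} (M : 'M[P]_n) N i j :
  inv_pair (ev M) N -> rep M (delta_mx 0 i) (delta_mx j 0) (N i j).
Proof.
move=> hM; exists N; split => //.
rewrite !ev_delta -rowE -colE.
by rewrite [LHS]mx11_scalar !mxE.
Qed.

End Rep.

Arguments rep {R A d} Z {n}.
Arguments rep_add {R A d Z n1 n2 M1 u1 v1 a1 M2 u2 v2 a2}.
Arguments rep_neg {R A d Z n M u v a}.
Arguments rep_mul {R A d Z n1 n2 M1 u1 v1 a1 M2 u2 v2 a2}.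
Arguments rep_inv {R A d Z n M u v a c}.
Arguments rep_inv_rev {R A d Z n M u v a}.
Arguments rep_closure {R A d Z n M u v a}.
Arguments rep_entry {R A d Z n M N} i j.
Arguments rep_poly {R A d} Z p.
Arguments rk_schur {R A rk} srk {n M Mi u v}.
Arguments rk_inv {R A rk} srk {n M N}.
Arguments rk_le_rows {R A rk} srk {m n} M.
Arguments scal11_inj {R A x y}.
Arguments inv_uniq {T n M N1 N2}.
Arguments left_inv_uniq {T n M N1 N2}.
Arguments ev_block {R A d Z m1 m2 n1 n2} a b c e.
Arguments ev0 {R A d Z m n}.
Arguments nc_evalC {R A d} Z c.
Arguments nc_evalV {R A d} Z i.

Lemma rexpr_det (R : realType) (A : algType R[i]) d (Z : 'I_d -> A) r b1 b2 :
  rexpr_eval Z r b1 -> rexpr_eval Z r b2 -> b1 = b2.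
Proof.
move=> h; elim: h b2 => {r b1}.
- by move=> c b2 h; inversion h.
- by move=> i b2 h; inversion h.
- move=> r s a b ha IHa hb IHb b2 h; inversion h; subst.
  by congr (_ + _); [apply: IHa | apply: IHb]; assumption.
- move=> r s a b ha IHa hb IHb b2 h; inversion h; subst.
  by congr (_ * _); [apply: IHa | apply: IHb]; assumption.
- move=> r a b ha IHa e1 e2 b2 h; inversion h; subst.
  match goal with H : rexpr_eval Z r ?x |- _ => have E := IHa _ H end; subst.
  match goal with H : a0 * b2 = 1 |- _ => by rewrite -[b]mulr1 -H mulrA e2 mul1r end.
Qed.

Section Main.
Variable R : realType.
Variables A B : algType R[i].
Variables (rkA : rank_fun A) (rkB : rank_fun B).
Hypotheses (srkA : sylvester_rank rkA) (fA : rank_faithful rkA) (gA : rank_regular rkA).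
Hypotheses (srkB : sylvester_rank rkB) (fB : rank_faithful rkB) (gB : rank_regular rkB).
Variable d : nat.
Variables (X : 'I_d -> A) (Y : 'I_d -> B).
Hypothesis hXY : forall m n (P : 'M[ncpoly R d]_(m, n)),
        rkB m n (nc_evalmx Y P) <= rkA m n (nc_evalmx X P).
Local Notation P := (ncpoly R d).

Lemma sigmaXY {n} (M : 'M[P]_n) :
  (exists N, inv_pair (nc_evalmx Y M) N) -> exists N, inv_pair (nc_evalmx X M) N.
Proof.
move=> [N hN].
have h := hXY _ _ M; rewrite (rk_inv srkB hN) in h.
have : rkA n n (nc_evalmx X M) = n%:R.
  by apply/le_anti; rewrite h rk_le_rows.
move/gA => [N' [_ [h1 h2]]].
by exists N'.
Qed.

Lemma rank_le {n} {M : 'M[P]_n} {u v a b} :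
  rep Y M u v b -> rep X M u v a -> rkB 1 1 b%:M <= rkA 1 1 a%:M.
Proof.
move=> [NY [hY eY]] [NX [hX eX]].
have h := hXY _ _ (block_mx M v u 0).
rewrite !ev_block !ev0 (rk_schur srkB hY) (rk_schur srkA hX) eY eX in h.
by rewrite lerD2l in h.
Qed.

Definition goodrep (a : A) (b : B) :=
  exists n (M : 'M[P]_n) u v, rep Y M u v b /\ rep X M u v a.

Lemma gr_zero {b} : goodrep 0 b -> b = 0.
Proof.
move=> [n [M [u [v [hY hX]]]]].
have h := rank_le hY hX.
have E0 : ((0 : A)%:M : 'M[A]_1) = 0 by apply/matrixP => i j; rewrite !mxE mul0rn.
rewrite E0 (srk0 srkA) in h.
have : (b%:M : 'M[B]_1) = 0.
  apply/eqP; apply: contraTT h => hb; rewrite -ltNge.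
  exact: fB.
move=> hb; apply: scal11_inj; rewrite hb.
by apply/matrixP => i j; rewrite !mxE mul0rn.
Qed.

Lemma gr_add {a1 b1 a2 b2} : goodrep a1 b1 -> goodrep a2 b2 -> goodrep (a1 + a2) (b1 + b2).
Proof.
move=> [n1 [M1 [u1 [v1 [hY1 hX1]]]]] [n2 [M2 [u2 [v2 [hY2 hX2]]]]].
by do 4 eexists; split; apply: rep_add; eassumption.
Qed.

Lemma gr_mul {a1 b1 a2 b2} : goodrep a1 b1 -> goodrep a2 b2 -> goodrep (a1 * a2) (b1 * b2).
Proof.
move=> [n1 [M1 [u1 [v1 [hY1 hX1]]]]] [n2 [M2 [u2 [v2 [hY2 hX2]]]]].
by do 4 eexists; split; apply: rep_mul; eassumption.
Qed.

Lemma gr_neg {a b} : goodrep a b -> goodrep (- a) (- b).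
Proof.
move=> [n1 [M1 [u1 [v1 [hY1 hX1]]]]].
by do 4 eexists; split; apply: rep_neg; eassumption.
Qed.

Lemma gr_poly (p : P) : goodrep (nc_eval X p) (nc_eval Y p).
Proof. by do 4 eexists; split; apply: rep_poly. Qed.

Lemma gr_wd {a b1 b2} : goodrep a b1 -> goodrep a b2 -> b1 = b2.
Proof.
move=> h1 h2; have := gr_add h1 (gr_neg h2); rewrite subrr => /gr_zero.
by move/eqP; rewrite subr_eq0 => /eqP.
Qed.

Definition S0 : pred A := fun a => `[< exists b, goodrep a b >].

Definition f0 (a : A) : B :=
  match pselect (exists b, goodrep a b) with
  | left H => proj1_sig (cid H)
  | right _ => 0
  end.

Lemma fE {a b} : goodrep a b -> f0 a = b.
Proof.
move=> h; rewrite /f0; case: pselect => [H|H]; last by exfalso; apply: H; exists b.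
by case: (cid H) => b' /= hb'; apply: gr_wd hb' h.
Qed.

Lemma S0P a : reflect (exists b, goodrep a b) (a \in S0).
Proof. exact: asboolP. Qed.

Lemma gr_S0 {a b} : goodrep a b -> a \in S0.
Proof. by move=> h; apply/S0P; exists b. Qed.

Lemma subhom_S0 : subhom X Y S0 f0.
Proof.
have hc : forall c : R[i], goodrep (c%:A) (c%:A).
  by move=> c; have := gr_poly (c%:MP); rewrite !nc_evalC.
have h1 : goodrep 1 1 by have := gr_poly 1; rewrite !rmorph1.
split.
- move=> a /S0P [b [n [M [u [v [hY hX]]]]]]; exact: rep_closure hX.
- split.
  + exact: gr_S0 h1.
  + move=> c x y /S0P[bx hx] /S0P[b' hy].
    by have := gr_add (gr_mul (hc c) hx) hy; rewrite !mulr_algl => /gr_S0.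
  + move=> x y /S0P[bx hx] /S0P[b' hy].
    exact: gr_S0 (gr_mul hx hy).
- by move=> p; exact: gr_S0 (gr_poly p).
- exact: fE h1.
- move=> x y /S0P[bx hx] /S0P[b' hy]; rewrite (fE hx) (fE hy); exact: fE (gr_add hx hy).
- move=> x y /S0P[bx hx] /S0P[b' hy]; rewrite (fE hx) (fE hy); exact: fE (gr_mul hx hy).
- move=> c x /S0P[bx hx]; rewrite (fE hx); apply: fE.
  by have := gr_mul (hc c) hx; rewrite !mulr_algl.
- move=> x /S0P[bx hx]; rewrite (fE hx).
  case: hx => n [M [u [v [hY _]]]]; exact: rep_closure hY.
- by move=> p; exact: fE (gr_poly p).
- move=> n M [NY [_ [e1 e2]]].
  have hNY : inv_pair (nc_evalmx Y M) NY by split.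
  have [NX hX] := sigmaXY M (ex_intro _ NY hNY).
  exists NX; split; last exact: hX.
  move=> i j; apply: gr_S0.
  exists n, M, (delta_mx 0 i), (delta_mx j 0); split.
    exact: (rep_entry i j hNY).
  exact: (rep_entry i j hX).
Qed.

Section SubhomFacts.
Variables (S : pred A) (f : A -> B).
Hypothesis h : subhom X Y S f.

Lemma sh_mem0 : 0 \in S.
Proof.
case: (subhom_subalg h) => S1 Slin _.
by have := Slin (-1) 1 1 S1 S1; rewrite scaleN1r addNr.
Qed.

Lemma sh_memD {x y} : x \in S -> y \in S -> x + y \in S.
Proof.
case: (subhom_subalg h) => S1 Slin _ hx hy.
by have := Slin 1 x y hx hy; rewrite scale1r.
Qed.

Lemma sh_memM {x y} : x \in S -> y \in S -> x * y \in S.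
Proof. by case: (subhom_subalg h) => S1 Slin Smul hx hy; apply: Smul. Qed.

Lemma sh_memZ {c x} : x \in S -> c *: x \in S.
Proof.
case: (subhom_subalg h) => S1 Slin _ hx.
by have := Slin c x 0 hx sh_mem0; rewrite addr0.
Qed.

Lemma sh_f0 : f 0 = 0.
Proof.
have := subhom_add h sh_mem0 sh_mem0; rewrite addr0.
by move=> /(congr1 (fun z => z - f 0)); rewrite subrr addrK.
Qed.

Lemma sh_sum n (F : 'I_n -> A) : (forall k, F k \in S) ->
  (\sum_k F k \in S) /\ f (\sum_k F k) = \sum_k f (F k).
Proof.
move=> hF.
apply: (big_ind2 (fun x y => x \in S /\ f x = y)).
- by split; [exact: sh_mem0 | exact: sh_f0].
- move=> x1 x2 y1 y2 [hx <-] [hy <-]; split; first exact: sh_memD.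
  exact: subhom_add h _ _ hx hy.
- by move=> k _; split.
Qed.

Lemma sh_mapmul {m n p} {M1 : 'M[A]_(m,n)} {M2 : 'M[A]_(n,p)} :
  (forall i j, M1 i j \in S) -> (forall i j, M2 i j \in S) ->
  (forall i j, (M1 *m M2) i j \in S) /\ map_mx f (M1 *m M2) = map_mx f M1 *m map_mx f M2.
Proof.
move=> h1 h2.
have H : forall i j, (M1 *m M2) i j \in S /\ f ((M1 *m M2) i j) = (map_mx f M1 *m map_mx f M2) i j.
  move=> i j; rewrite !mxE.
  have [hs hf] := sh_sum _ (fun k => M1 i k * M2 k j) (fun k => sh_memM (h1 i k) (h2 k j)).
  split => //; rewrite hf; apply: eq_bigr => k _; rewrite !mxE.
  exact: subhom_mul h _ _ (h1 i k) (h2 k j).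
split; first by move=> i j; exact: (H i j).1.
by apply/matrixP => i j; rewrite mxE; exact: (H i j).2.
Qed.

Lemma sh_ev {m n} (w : 'M[P]_(m,n)) :
  (forall i j, nc_evalmx X w i j \in S) /\ map_mx f (nc_evalmx X w) = nc_evalmx Y w.
Proof.
split; first by move=> i j; rewrite mxE; exact: subhom_gen h _.
by apply/matrixP => i j; rewrite !mxE; exact: subhom_struct h _.
Qed.

Lemma sh_one n : map_mx f (1%:M : 'M[A]_n) = 1%:M.
Proof.
apply/matrixP => i j; rewrite !mxE; case: (i == j).
  by rewrite !mulr1n; exact: subhom_1 h.
by rewrite !mulr0n; exact: sh_f0.
Qed.

Lemma sub_S0 a : a \in S0 -> a \in S /\ f a = f0 a.
Proof.
move=> /S0P [b hab]; rewrite (fE hab).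
case: hab => n [M [u [v [[NY [hY eY]] [NX [hX eX]]]]]].
have sig := @subhom_sigma _ _ _ _ _ _ _ _ h n M.
have [|N1 [hS1 [e1 e2]]] := sig.
  exists NY; split; last by case: hY.
  move=> i j; rewrite /rat_closure; apply/asboolP.
  by exists n, M, NY; case: hY => ? ?; split => //; split => //; exists i, j.
have EN : NX = N1 by apply: inv_uniq hX _; split.
subst N1.
have [hu mu] := sh_ev u; have [hv mv] := sh_ev v; have [hM mM] := sh_ev M.
have [h1 m1] := sh_mapmul hu hS1.
have [h2 m2] := sh_mapmul h1 hv.
have [h3 m3] := sh_mapmul hM hS1.
have ENY : NY = map_mx f NX.
  apply: left_inv_uniq hY _.
  by rewrite -mM -m3 e1 sh_one.
have Ea : a = (nc_evalmx X u *m NX *m nc_evalmx X v) 0 0 by rewrite eX mxE eqxx mulr1n.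
split; first by rewrite Ea; exact: h2.
have := congr1 (fun Mx : 'M[B]_1 => Mx 0 0) m2.
rewrite m1 mu mv -ENY eY mxE -Ea => ->.
by rewrite mxE eqxx mulr1n.
Qed.

End SubhomFacts.

Lemma subhom_ext S f g : subhom X Y S f -> {in S, f =1 g} -> subhom X Y S g.
Proof.
move=> h E.
have hsa := subhom_subalg h.
split.
- exact: subhom_sub h.
- exact: hsa.
- exact: subhom_gen h.
- rewrite -E; first exact: subhom_1 h.
  by case: hsa.
- move=> x y hx hy; have hxy := sh_memD _ _ h hx hy; rewrite -!E //.
  exact: subhom_add h _ _ hx hy.
- move=> x y hx hy; have hxy := sh_memM _ _ h hx hy; rewrite -!E //.
  exact: subhom_mul h _ _ hx hy.
- move=> c x hx; have hcx := sh_memZ _ _ h (c:=c) hx; rewrite -!E //.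
  exact: subhom_scale h _ _ hx.
- by move=> x hx; rewrite -E //; exact: subhom_range h _ hx.
- by move=> p; rewrite -E; [exact: subhom_struct h _ | exact: subhom_gen h _].
- exact: subhom_sigma h.
Qed.

Lemma unique_spec : unique_specialization X Y.
Proof.
split; first by exists S0, f0; exact: subhom_S0.
move=> S1 f1 S2 f2 h1 h2; exists S0; split.
- by move=> a ha; exact: (sub_S0 _ _ h1 _ ha).1.
- by move=> a ha; exact: (sub_S0 _ _ h2 _ ha).1.
- by move=> a ha; rewrite (sub_S0 _ _ h1 _ ha).2 (sub_S0 _ _ h2 _ ha).2.
- apply: (subhom_ext _ _ _ subhom_S0) => a ha.
  by rewrite (sub_S0 _ _ h1 _ ha).2.
Qed.

Lemma part2 r b : rexpr_eval Y r b -> exists a, goodrep a b /\ rexpr_eval X r a.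
Proof.
elim => {r b}.
- move=> c; exists (c%:A); split; last by constructor.
  by have := gr_poly (c%:MP); rewrite !nc_evalC.
- move=> i; exists (X i); split; last by constructor.
  by have := gr_poly (<< (1 : R[i]) *g fmu i >> : P); rewrite !nc_evalV.
- move=> r s a b _ [a1 [g1 e1]] _ [a2 [g2 e2]]; exists (a1 + a2); split.
    exact: gr_add g1 g2.
  exact: REvAdd.
- move=> r s a b _ [a1 [g1 e1]] _ [a2 [g2 e2]]; exists (a1 * a2); split.
    exact: gr_mul g1 g2.
  exact: REvMul.
- move=> r b0 b _ [a0 [g0 ex]] e1 e2.
  case: g0 => n [M [u [v [hY hX]]]].
  have hY' := rep_inv hY e1 e2.
  have [N' hN'] : exists N, inv_pair (nc_evalmx X (block_mx M v u 0)) N.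
    by apply: sigmaXY; case: hY' => N [hN _]; exists N.
  have [c [ac ca hc]] := rep_inv_rev hX (ex_intro _ N' hN').
  exists c; split; first by exists (n + 1)%N; do 3 eexists; split; eassumption.
  exact: REvInv ex ac ca.
Qed.

Lemma main_result :
  unique_specialization X Y /\
  (forall r : rexpr R d,
      (exists b, rexpr_eval Y r b) ->
      exists a, rexpr_eval X r a /\
        forall b, rexpr_eval Y r b -> rkB 1%N 1%N b%:M <= rkA 1%N 1%N a%:M).
Proof.
split; first exact: unique_spec.
move=> r [b hb]; have [a [ga ea]] := part2 _ _ hb.
exists a; split => // b' hb'.
rewrite (rexpr_det _ _ _ _ _ _ _ hb' hb).
case: ga => n [M [u [v [hY hX]]]].
exact: rank_le hY hX.
Qed.

End Main.

Theorem proposition2p21 (R : realType) (A B : algType R[i])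
    (rkA : rank_fun A) (rkB : rank_fun B)
    (srkA : sylvester_rank rkA) (fA : rank_faithful rkA) (gA : rank_regular rkA)
    (srkB : sylvester_rank rkB) (fB : rank_faithful rkB) (gB : rank_regular rkB)
    (d : nat) (X : 'I_d -> A) (Y : 'I_d -> B)
    (hXY : forall m n (P : 'M[ncpoly R d]_(m, n)),
        rkB m n (nc_evalmx Y P) <= rkA m n (nc_evalmx X P)) :
  unique_specialization X Y /\
  (forall r : rexpr R d,
      (exists b, rexpr_eval Y r b) ->
      exists a, rexpr_eval X r a /\
        forall b, rexpr_eval Y r b -> rkB 1%N 1%N b%:M <= rkA 1%N 1%N a%:M).
Proof.
by apply: main_result; eassumption.
Qed.
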